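(* Let $k,n,m,t$ be positive integers. The sum, over all $\pi\in NC^k(n)$ with exactly $m$ blocks, of the number of blocks of $\pi$ of size $tk$ equals $$\binom{nk}{m-1}\binom{n-t-1}{m-2}.$$
   Context: A partition $\pi$ of $[N]=\{1,\dots,N\}$ is non-crossing if there are no $1\le a<b<c<d\le N$ with $a,c$ in one block and $b,d$ in another. $NC^k(n)$ is the set of non-crossing partitions of $[kn]$ all of whose blocks have size divisible by $k$. Binomial coefficients: for integers $a,b$, $\binom{a}{b}=\frac{a!}{b!(a-b)!}$ if $0\le b\le a$, $\binom{-1}{-1}=1$, and $\binom{a}{b}=0$ otherwise. *)

(* Defs.v *)
From mathcomp Require Import all_boot all_order all_algebra.
Set Implicit Arguments. Unset Strict Implicit. Unset Printing Implicit Defensive.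
Import Order.TTheory GRing.Theory Num.Theory.

(* A set partition of [N] is encoded on 'I_N = {0,...,N-1} (shifted by one,
   which preserves the order) as P : {set {set 'I_N}} with
   partition P [set: 'I_N] (blocks nonempty, pairwise disjoint, covering). *)

Definition noncrossing (N : nat) (P : {set {set 'I_N}}) : bool :=
  ~~ [exists B1 in P, exists B2 in P, exists a : 'I_N, exists b : 'I_N,
        exists c : 'I_N, exists d : 'I_N,
        [&& B1 != B2, (a < b)%N, (b < c)%N, (c < d)%N,
            a \in B1, c \in B1, b \in B2 & d \in B2]].

Definition NCk (k n : nat) : {set {set {set 'I_(k * n)}}} :=
  [set P | [&& partition P [set: 'I_(k * n)], noncrossing P
            & [forall B in P, (k %| #|B|)%N]]].

(* Binomial coefficient on integers with the paper's convention:
   C(a,b) = a!/(b!(a-b)!) if 0 <= b <= a, C(-1,-1) = 1, and 0 otherwise. *)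
Definition binz (a b : int) : nat :=
  if (0 <= b)%R && (b <= a)%R then 'C(`|a|%N, `|b|%N)
  else if (a == (-1)%R) && (b == (-1)%R) then 1%N else 0%N.

(* Main.v *)
Require Import Defs.
From mathcomp Require Import all_boot all_order all_algebra.
From mathcomp Require Import zify.
Set Implicit Arguments. Unset Strict Implicit. Unset Printing Implicit Defensive.


Fixpoint lastb (P : pred nat) (n : nat) : nat :=
  if n is n'.+1 then (if P n' then n' else lastb P n') else 0.

Lemma lastbP (P : pred nat) n j : j < n -> P j ->
  [/\ lastb P n < n, P (lastb P n) & j <= lastb P n].
Proof.
elim: n => [//|n IH] /=; rewrite ltnS leq_eqVlt => /orP [/eqP ->|jn] Pj.
  by rewrite Pj.
case: ifP => Pn; first by split => //; lia.
by case: (IH jn Pj) => a b c; split => //; lia.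
Qed.

Lemma lastb_ext (P1 P2 : pred nat) n : (forall j, j < n -> P1 j = P2 j) -> lastb P1 n = lastb P2 n.
Proof. elim: n => //= n IH H; rewrite H // IH // => j jn; apply: H; lia. Qed.

Lemma lastb_lt (P : pred nat) n : 0 < n -> lastb P n < n.
Proof. elim: n => //= n IH _; case: ifP => _ //; case: n IH => // n IH; have := IH isT; lia. Qed.

Definition cnt (f : nat -> nat) (i p : nat) : nat := \sum_(0 <= x < i) (f x == p).

Fixpoint ownl (a : seq nat) (n : nat) : seq nat :=
  if n is n'.+1 then
    let l := ownl a n' in
    rcons l (if 0 < nth 0 a n' then n'
             else nth 0 l (lastb (fun j => cnt (nth 0 l) n' (nth 0 l j) < nth 0 a (nth 0 l j)) n'))
  else [::].

Definition own a i := nth 0 (ownl a i.+1) i.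

Lemma size_ownl a n : size (ownl a n) = n.
Proof. by elim: n => //= n IH; rewrite size_rcons IH. Qed.

Lemma ownl_prefix a n i : i < n -> nth 0 (ownl a n) i = own a i.
Proof.
elim: n => [//|n IH]; rewrite ltnS leq_eqVlt => /orP [/eqP ->|lt].
  by [].
by rewrite /= nth_rcons size_ownl lt IH.
Qed.

Lemma own_rec a i : own a i = if 0 < nth 0 a i then i else
  own a (lastb (fun j => cnt (own a) i (own a j) < nth 0 a (own a j)) i).
Proof.
rewrite /own /= nth_rcons size_ownl ltnn eqxx; case: ifP => // a0.
have E : forall j, j < i -> nth 0 (ownl a i) j = own a j by move=> j; apply: ownl_prefix.
have Ec : forall v, cnt (nth 0 (ownl a i)) i v = cnt (own a) i v.
  move=> v; apply: eq_big_nat => x /andP [_ xi]; by rewrite E.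
case: i a0 E Ec => [|i] a0 E Ec; first by rewrite /= a0.
set P1 := (fun j => _); set P2 := (fun j => _).
have -> : lastb P1 i.+1 = lastb P2 i.+1.
  by apply: lastb_ext => j ji; rewrite /P1 /P2 Ec E.
by rewrite E // lastb_lt.
Qed.


Lemma sum_le_eq n (f g : nat -> nat) : (forall p, p < n -> f p <= g p) ->
  \sum_(0 <= p < n) f p = \sum_(0 <= p < n) g p -> forall p, p < n -> f p = g p.
Proof.
elim: n => [//|n IH] H; rewrite !big_nat_recr //= => E p.
have le1 : \sum_(0 <= p < n) f p <= \sum_(0 <= p < n) g p.
  rewrite !big_nat; apply: leq_sum => i /andP [_ lt]; apply: H; lia.
have le2 := H n (ltnSn n).
rewrite ltnS leq_eqVlt => /orP [/eqP ->|lt]; first lia.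
apply: IH => //; [move=> q qn; apply: H; lia | lia].
Qed.

Lemma sum_lt_ex n (f g : nat -> nat) :
  \sum_(0 <= p < n) f p < \sum_(0 <= p < n) g p -> exists2 p, p < n & f p < g p.
Proof.
elim: n => [|n IH]; first by rewrite !big_nil.
rewrite !big_nat_recr //= => H.
case: (ltnP (f n) (g n)) => [lt|ge]; first by exists n.
have [|p pn lt] := IH; first lia.
by exists p => //; lia.
Qed.

Lemma sum_take (a : seq nat) j : sumn (take j a) = \sum_(0 <= p < j) nth 0 a p.
Proof.
elim: a j => [|x a IH] [|j] /=.
- by rewrite big_nil.
- by rewrite big1_seq // => i _; rewrite nth_nil.
- by rewrite big_nil.
- by rewrite big_nat_recl // IH.
Qed.

Lemma cntS f i p : cnt f i.+1 p = cnt f i p + (f i == p).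
Proof. by rewrite /cnt big_nat_recr. Qed.

Lemma cnt_mono f i j p : i <= j -> cnt f i p <= cnt f j p.
Proof. by move=> ij; rewrite /cnt (big_cat_nat (leq0n i) ij) /=; lia. Qed.

Lemma sum_eqn v i : \sum_(0 <= p < i) (v == p) = (v < i).
Proof. elim: i => [|i IH]; first by rewrite big_nil. rewrite big_nat_recr //= IH; case: ltngtP => //= h; lia. Qed.

Lemma sum_cnt f i j : (forall x, x < i -> f x < j) -> \sum_(0 <= p < j) cnt f i p = i.
Proof.
move=> H; rewrite /cnt exchange_big_nat /=.
rewrite (eq_big_nat _ _ (F2 := fun _ => 1)) ?sum_nat_const_nat ?muln1 ?subn0 //.
by move=> x /andP [_ xi]; rewrite sum_eqn H.
Qed.

Definition validc (a : seq nat) (N : nat) :=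
  [/\ size a = N.+1, sumn a = N & forall j, j <= N -> j <= sumn (take j a)].

Lemma own_inv a N : validc a N -> forall i, i <= N ->
  (forall x, x < i -> own a x <= x /\ 0 < nth 0 a (own a x)) /\
  (forall p, cnt (own a) i p <= nth 0 a p).
Proof.
case=> sa suma pre; elim=> [_|i IH iN].
  by split => // p; rewrite /cnt big_nil.
have [I1 I2] := IH (ltnW iN).
have own_root : forall p, 0 < nth 0 a p -> own a p = p.
  by move=> p; rewrite own_rec => ->.
case: (posnP (nth 0 a i)) => [Ai0|Aipos].
-
  have hs : \sum_(0 <= p < i) cnt (own a) i p < \sum_(0 <= p < i) nth 0 a p.
    rewrite sum_cnt; last by move=> x xi; have [h _] := I1 _ xi; lia.
    have := pre i.+1 iN; rewrite sum_take big_nat_recr //= Ai0 addn0; lia.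
  have [p pi lt] := sum_lt_ex hs.
  set Pd := (fun j => cnt (own a) i (own a j) < nth 0 a (own a j)).
  have Pdp : Pd p by rewrite /Pd own_root //; lia.
  have [lt' Pdj jle] := lastbP pi Pdp.
  have Eo : own a i = own a (lastb Pd i) by rewrite own_rec Ai0.
  split.
  + move=> x; rewrite ltnS leq_eqVlt => /orP [/eqP ->|xi]; last exact: I1.
    rewrite Eo; have [h1 h2] := I1 _ lt'; split => //; lia.
  + move=> q; rewrite cntS; case: eqP => [<-|_]; last by rewrite addn0.
    rewrite Eo; move: Pdj; rewrite /Pd; lia.
- have Eo : own a i = i by rewrite own_root.
  split.
  + move=> x; rewrite ltnS leq_eqVlt => /orP [/eqP ->|xi]; last exact: I1.
    by rewrite Eo.
  + move=> q; rewrite cntS Eo; case: eqP => [<-|_]; last by rewrite addn0.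
    have -> : cnt (own a) i i = 0.
      apply/eqP; rewrite /cnt sum_nat_seq_eq0; apply/allP => x.
      rewrite mem_index_iota => /andP [_ xi]; have [h _] := I1 _ xi.
      apply/implyP => _; apply/eqP; lia.
    lia.
Qed.

Section V.
Variables (a : seq nat) (N : nat).
Hypothesis va : validc a N.

Lemma own_props x : x < N ->
  [/\ own a x <= x, 0 < nth 0 a (own a x) & own a (own a x) = own a x].
Proof.
move=> xN; have [I1 _] := own_inv va (leqnn N); have [h1 h2] := I1 _ xN.
by split => //; rewrite own_rec h2.
Qed.

Lemma own_root x : 0 < nth 0 a x -> own a x = x.
Proof. by rewrite own_rec => ->. Qed.

Lemma open_exists i : i < N -> nth 0 a i = 0 ->
  exists2 p, p < i & cnt (own a) i (own a p) < nth 0 a (own a p).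
Proof.
move=> iN Ai0; case: va => sa suma pre.
have [I1 I2] := own_inv va (ltnW iN).
have hs : \sum_(0 <= p < i) cnt (own a) i p < \sum_(0 <= p < i) nth 0 a p.
  rewrite sum_cnt; last by move=> x xi; have [h _] := I1 _ xi; lia.
  have := pre i.+1 iN; rewrite sum_take big_nat_recr //= Ai0 addn0; lia.
have [p pi lt] := sum_lt_ex hs.
by exists p => //; rewrite own_root //; lia.
Qed.

Lemma own_step w : w < N -> nth 0 a w = 0 ->
  exists j, [/\ j < w, own a w = own a j,
     cnt (own a) w (own a j) < nth 0 a (own a j) &
     forall y, y < w -> cnt (own a) w (own a y) < nth 0 a (own a y) -> y <= j].
Proof.
move=> wN Aw0; have [p pw Pp] := open_exists wN Aw0.
set Pd := (fun j => cnt (own a) w (own a j) < nth 0 a (own a j)).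
have [lt Pdj jle] := lastbP (P := Pd) pw Pp.
exists (lastb Pd w); split => //; first by rewrite own_rec Aw0.
move=> y yw Py; by have [_ _] := lastbP (P := Pd) yw Py.
Qed.

Lemma own_nc c : forall x y w, x < y -> y < c -> c < w -> w < N ->
  own a x = own a c -> own a y = own a w -> own a x = own a y.
Proof.
elim/ltn_ind: c => c IH x y w xy yc cw wN Exc Eyw.
have [hx1 hx2 hx3] := own_props (ltn_trans xy (ltn_trans yc (ltn_trans cw wN))).
have Ac0 : nth 0 a c = 0.
  case: (posnP (nth 0 a c)) => // /own_root Ec; lia.
have [hy1 hy2 hy3] := own_props (ltn_trans yc (ltn_trans cw wN)).
have Aw0 : nth 0 a w = 0.
  case: (posnP (nth 0 a w)) => // /own_root Ew; lia.
have [jw [jww Ejw Pw _]] := own_step wN Aw0.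
have [j [jc Ecj Pj jmax]] := own_step (ltn_trans cw wN) Ac0.
have Py : cnt (own a) c (own a y) < nth 0 a (own a y).
  rewrite Eyw Ejw; apply: leq_ltn_trans Pw; exact: cnt_mono (ltnW cw).
have yj := jmax _ yc Py.
move: yj; rewrite leq_eqVlt => /orP [/eqP Eyj|yj].
  by rewrite Exc Ecj -Eyj.
apply: (IH j jc x y w) => //; [lia | by rewrite Exc].
Qed.

Lemma cnt_full p : p < N -> cnt (own a) N p = nth 0 a p.
Proof.
case: (va) => sa suma pre.
have [_ I2] := own_inv va (leqnn N).
have S1 : \sum_(0 <= p < N) cnt (own a) N p = N.
  by apply: sum_cnt => x xN; have [h _ _] := own_props xN; lia.
have S2 : \sum_(0 <= p < N) nth 0 a p = N.
  have := pre N (leqnn N); have := sum_take a N.+1; rewrite take_oversize ?sa //.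
  rewrite big_nat_recr //= suma sum_take; lia.
apply: sum_le_eq => //; by rewrite S1 S2.
Qed.

Lemma lastA0 : nth 0 a N = 0.
Proof.
case: (va) => sa suma pre.
have := pre N (leqnn N); have := sum_take a N.+1; rewrite take_oversize ?sa //.
rewrite big_nat_recr //= suma sum_take; lia.
Qed.

End V.


Definition codeof (f : nat -> nat) N :=
  mkseq (fun i => if (i < N) && (f i == i) then cnt f N i else 0) N.+1.

Lemma cnt_ge (f : nat -> nat) N x v : x < N -> (f x == v) <= cnt f N v.
Proof. move=> xN; rewrite /cnt (big_cat_nat (leq0n x) (ltnW xN)) /= (big_ltn xN); lia. Qed.

Section F.
Variables (f : nat -> nat) (N : nat).
Hypothesis Hf1 : forall x, x < N -> f x <= x.
Hypothesis Hf2 : forall x, x < N -> f (f x) = f x.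
Hypothesis Hnc : forall x y c w, x < y -> y < c -> c < w -> w < N ->
  f x = f c -> f y = f w -> f x = f y.

Lemma codeof_sum j : j <= N.+1 ->
  \sum_(0 <= p < j) nth 0 (codeof f N) p = \sum_(0 <= x < N) (f x < j).
Proof.
move=> jN.
rewrite (eq_big_nat _ _ (F2 := fun p => \sum_(0 <= x < N) ((p < N) && (f p == p) && (f x == p)))); last first.
  move=> p /andP [_ pj]; rewrite /codeof nth_mkseq; last lia.
  case: ifP => H; last by rewrite big1_seq.
  by rewrite /cnt.
rewrite exchange_big_nat /=; apply: eq_big_nat => x /andP [_ xN].
rewrite -(sum_eqn (f x) j); apply: eq_big_nat => p _.
case: (eqVneq (f x) p) => [<-|_]; last by rewrite andbF.
rewrite Hf2 // eqxx andbT; have := Hf1 xN; case: ltnP => //; lia.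
Qed.

Lemma codeof_valid : validc (codeof f N) N.
Proof.
split; first by rewrite size_mkseq.
- have := codeof_sum (leqnn N.+1); rewrite -sum_take take_oversize ?size_mkseq // => ->.
  rewrite (eq_big_nat _ _ (F2 := fun _ => 1)) ?sum_nat_const_nat ?muln1 ?subn0 //.
  move=> x /andP [_ xN]; have := Hf1 xN; case: ltnP => //; lia.
- move=> j jN; rewrite sum_take codeof_sum; last lia.
  rewrite (big_cat_nat (leq0n j) jN) /=.
  rewrite (eq_big_nat _ _ (F2 := fun _ => 1) (m := 0) (n := j)) ?sum_nat_const_nat ?muln1 ?subn0; first lia.
  move=> x /andP [_ xj]; have := Hf1 (leq_trans xj jN); case: ltnP => //; lia.
Qed.

Lemma codeof_own i : i < N -> own (codeof f N) i = f i.
Proof.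
elim/ltn_ind: i => i IH iN.
set a := codeof f N.
have Ai : nth 0 a i = if f i == i then cnt f N i else 0.
  by rewrite /a /codeof nth_mkseq ?iN //; lia.
have cntpos : forall p, p < N -> f p = p -> 0 < cnt f N p.
  move=> p pN fp; have := @cnt_ge f N p p pN; rewrite fp eqxx; lia.
case: (eqVneq (f i) i) => [fi|fi].
  by rewrite own_rec Ai fi eqxx cntpos.
rewrite own_rec Ai (negbTE fi) ltnn.
set Pd := (fun j => _).
have Ecnt : forall v, cnt (own a) i v = cnt f i v.
  move=> v; apply: eq_big_nat => x /andP [_ xi]; rewrite IH //; lia.
have Aroot : forall j, j < N -> nth 0 a (f j) = cnt f N (f j).
  move=> j jN; rewrite /a /codeof nth_mkseq; last by have := Hf1 jN; lia.
  by rewrite Hf2 // eqxx (leq_ltn_trans (Hf1 jN) jN).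
have PdE : forall j, j < i -> Pd j -> exists2 r, i <= r < N & f r = f j.
  move=> j ji; rewrite /Pd IH; [|lia|lia]; rewrite Ecnt Aroot; last lia.
  rewrite /cnt (big_cat_nat (leq0n i) (ltnW iN)) /= -ltn_subLR ?subnn; last by [].
  rewrite lt0n sum_nat_seq_neq0 => /hasP [r]; rewrite mem_index_iota => rr /eqP H.
  by exists r => //; apply/eqP; move: H; case: (f r == f j).
have fii : f i < i by have := Hf1 iN; lia.
set j0 := lastb (fun x => f x == f i) i.
have [j0i fj0 _] := lastbP (P := fun x => f x == f i) fii (introT eqP (Hf2 iN)).
have Pdj0 : Pd j0.
  rewrite /Pd IH; [|lia|lia]; rewrite Ecnt Aroot; last lia.
  rewrite (eqP fj0) /cnt (big_cat_nat (leq0n i) (ltnW iN)) /= (big_ltn iN).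
  by rewrite eqxx; lia.
have [jsi Pdj jle] := lastbP (P := Pd) j0i Pdj0.
set js := lastb Pd i in jsi Pdj jle *.
rewrite IH; [|by []|lia].
have [r /andP [ir rN] fr] := PdE _ jsi Pdj.
case: (eqVneq (f js) (f i)) => [//|ne].
move: jle; rewrite leq_eqVlt => /orP [/eqP E|lt].
  by move: ne; rewrite -E (eqP fj0) eqxx.
have ri : i < r by move: ir; rewrite leq_eqVlt => /orP [/eqP E|//]; move: ne; rewrite -fr E eqxx.
have := Hnc lt jsi ri rN (eqP fj0) (esym fr).
by rewrite (eqP fj0) => E; move: ne; rewrite -E eqxx.
Qed.

End F.


Definition validb (s : seq nat) N :=
  [&& size s == N.+1, sumn s == N & all (fun j => j <= sumn (take j s)) (iota 0 N.+1)].

Lemma validbP s N : reflect (validc s N) (validb s N).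
Proof.
apply: (iffP and3P) => [[/eqP h1 /eqP h2 /allP h3]|[h1 h2 h3]]; split => //.
- by move=> j jN; apply: h3; rewrite mem_iota; lia.
- by apply/eqP.
- by apply/eqP.
- by apply/allP => j; rewrite mem_iota => /andP [_ h]; apply: h3; lia.
Qed.

Lemma sumn_drop (l : seq nat) r : sumn (drop r l) = sumn l - sumn (take r l).
Proof. by rewrite -{2}(cat_take_drop r l) sumn_cat; lia. Qed.

Lemma take_take T i j (l : seq T) : i <= j -> take i (take j l) = take i l.
Proof. by move=> h; rewrite -take_min (minn_idPl h). Qed.

Section Cyc.
Variables (s : seq nat) (N : nat).
Hypotheses (ss : size s = N.+1) (sums : sumn s = N).
Local Notation T j := (sumn (take j s)).

Lemma T_mono j l : j <= l -> T j <= T l.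
Proof. by move=> jl; rewrite !sum_take (big_cat_nat (leq0n j) jl) /=; lia. Qed.

Lemma T_le j : T j <= N.
Proof. by rewrite -sums -{2}(cat_take_drop j s) sumn_cat; lia. Qed.

Lemma rot_prefix r j : r <= N -> j <= N ->
  sumn (take j (rot r s)) =
  if j < N.+1 - r then T (j + r) - T r else N - T r + T (j - (N.+1 - r)).
Proof.
move=> rN jN; rewrite /rot take_cat size_drop ss.
case: ifP => h.
  rewrite take_drop sumn_drop take_take //; lia.
rewrite sumn_cat sumn_drop sums take_take //; lia.
Qed.

Definition Pr r := (forall l, l <= N -> T r + l <= T l + r) /\ (forall l, l < r -> T r + l < T l + r).

Lemma valid_rot_Pr r : r <= N -> (forall j, j <= N -> j <= sumn (take j (rot r s))) -> Pr r.
Proof.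
move=> rN V; have T0 : T 0 = 0 by rewrite take0.
have Pb : forall l, l < r -> T r + l < T l + r.
  move=> l lr; case: l lr => [|l] lr.
    have := V (N.+1 - r); rewrite rot_prefix; try lia.
    rewrite ltnn subnn T0 => h; have := T_le r; lia.
  have := V (l.+1 + (N.+1 - r)); rewrite rot_prefix; try lia.
  rewrite ifF; last lia.
  have -> : l.+1 + (N.+1 - r) - (N.+1 - r) = l.+1 by lia.
  move=> h; have := T_le r; lia.
split => // l lN; case: (ltnP l r) => [lr|rl]; first by have := Pb l lr; lia.
have := V (l - r); rewrite rot_prefix; try lia.
rewrite ifT; last lia.
have -> : l - r + r = l by lia.
by move=> h; have := T_mono rl; lia.
Qed.

Lemma Pr_valid_rot r : r <= N -> Pr r -> forall j, j <= N -> j <= sumn (take j (rot r s)).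
Proof.
move=> rN [P1 P2] j jN; rewrite rot_prefix //.
case: ifP => h.
  have := P1 (j + r); have := T_mono (leq_addl j r); lia.
have := P2 (j - (N.+1 - r)); have := T_le r; lia.
Qed.

Lemma Pr_uniq r r' : Pr r -> Pr r' -> r <= N -> r' <= N -> r = r'.
Proof.
move=> [P1 P2] [Q1 Q2] rN rN'; case: (ltngtP r r') => // h.
- have := Q2 r h; have := P1 r' rN'; lia.
- have := P2 r' h; have := Q1 r rN; lia.
Qed.

Lemma Pr_exists : exists2 r, r <= N & Pr r.
Proof.
pose w (l : 'I_N.+1) := T l + N.+1 - l.
have [r1 _ r1min] := arg_minnP w (isT : predT (ord0 : 'I_N.+1)).
have ex : exists r, (r < N.+1) && (T r + N.+1 - r == w r1) by exists r1; rewrite ltn_ord eqxx.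
case: (ex_minnP ex) => r0 /andP [r0N /eqP Er0] r0min.
exists r0; first lia.
split.
- move=> l lN; have := r1min (Ordinal (n:=N.+1) (m:=l) (leq_ltn_trans lN (ltnSn N))) isT.
  rewrite -Er0 /w /=; lia.
- move=> l lr0; have := r1min (Ordinal (n:=N.+1) (m:=l) (ltn_trans lr0 r0N)) isT.
  rewrite -Er0 /w /= => h.
  have : T l + N.+1 - l != w r1.
    apply/negP => E; have := r0min l; rewrite E andbT => /(_ (ltn_trans lr0 r0N)); lia.
  rewrite -Er0; lia.
Qed.

Lemma cycle_count : \sum_(r < N.+1) validb (rot r s) N = 1.
Proof.
have [r0 r0N P0] := Pr_exists.
have VE : forall r : 'I_N.+1, validb (rot r s) N = (val r == r0).
  move=> r; apply/idP/idP.
  - move=> /validbP [_ _ V]; apply/eqP; apply: Pr_uniq (valid_rot_Pr _ V) P0 _ r0N => //; have := ltn_ord r; lia.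
  - move=> /eqP Er; apply/validbP; split; first by rewrite size_rot.
    + by rewrite sumn_rot.
    + apply: Pr_valid_rot; last by rewrite Er.
      have := ltn_ord r; lia.
rewrite (eq_bigr _ (fun r _ => congr1 nat_of_bool (VE r))).
rewrite (bigD1 (Ordinal (n:=N.+1) (m:=r0) (leq_ltn_trans r0N (ltnSn N)))) //= eqxx big1 // => r.
by rewrite -val_eqE /= => /negbTE ->.
Qed.

End Cyc.


Lemma sum_tuple_cons L (T : finType) (F : L.+1.-tuple T -> nat) :
  \sum_(c : L.+1.-tuple T) F c = \sum_(x : T) \sum_(b : L.-tuple T) F [tuple of x :: b].
Proof.
rewrite pair_bigA /=.
rewrite (reindex (fun p : T * L.-tuple T => [tuple of p.1 :: p.2])) //=.
exists (fun c => (thead c, [tuple of behead c])).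
  by move=> [x b] _ /=; rewrite theadE; congr pair; apply: val_inj.
by move=> c _ /=; rewrite [RHS]tuple_eta.
Qed.

Fixpoint comp (q j : nat) : nat :=
  if j is j'.+1 then \sum_(1 <= v < q.+1) comp (q - v) j' else (q == 0).

Lemma compSS q j : comp q.+1 j.+1 = comp q j + comp q j.+1.
Proof.
rewrite /= big_ltn // subSS subn0; congr addn.
rewrite big_add1 /=; apply: eq_big_nat => v _; congr comp; lia.
Qed.

Lemma comp_bin q j : comp q.+1 j.+1 = 'C(q, j).
Proof.
elim: q j => [|q IH] j.
  rewrite /= big_nat1 subnn; case: j => [|j] //=; rewrite big_geq //.
rewrite compSS IH; case: j => [|j].
  by rewrite /= !bin0.
by rewrite IH binS addnC.
Qed.

Lemma comp0j j : comp 0 j.+1 = 0.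
Proof. by rewrite /= big_geq. Qed.

Lemma sum_nat_pick m n c (g : nat -> nat) : m <= c < n ->
  \sum_(m <= x < n) (if x == c then g x else 0) = g c.
Proof.
move=> /andP [mc cn]; rewrite (big_cat_nat mc (ltnW cn)) /= (big_ltn cn) eqxx.
rewrite big1_seq; last by move=> x /andP [_]; rewrite mem_index_iota => /andP [_ h]; rewrite ifF //; apply/negbTE; rewrite neq_ltn h.
rewrite big1_seq; last by move=> x /andP [_]; rewrite mem_index_iota => /andP [h _]; rewrite ifF //; apply/negbTE; rewrite neq_ltn h orbT.
by rewrite add0n addn0.
Qed.

Lemma sum_mult k B q (h : nat -> nat) : 0 < k -> q * k < B ->
  \sum_(1 <= x < B) (if (k %| x) && (x <= q * k) then h (x %/ k) else 0) = \sum_(1 <= v < q.+1) h v.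
Proof.
move=> k0; elim: q => [|q IH] qB.
  rewrite [RHS]big_geq // big1_seq // => x /andP [_]; rewrite mem_index_iota => /andP [h1 _].
  by rewrite mul0n leqNgt h1 andbF.
rewrite big_nat_recr //= -IH; last by lia.
have -> : h q.+1 = h (q.+1 * k %/ k) by rewrite mulnK.
rewrite -(sum_nat_pick (m := 1) (n := B) (c := q.+1 * k) (fun x => h (x %/ k))); last first.
  by apply/andP; split; [rewrite muln_gt0 k0 | ].
rewrite -big_split /=; apply: eq_big_nat => x _.
case: (eqVneq x (q.+1 * k)) => [->|ne].
  have -> : (q.+1 * k <= q * k) = false by rewrite leq_pmul2r // ltnn.
  by rewrite andbF add0n leqnn andbT dvdn_mull.
rewrite addn0.
congr (if _ then _ else _).
case: (boolP (k %| x)) => //= /dvdnP [y Ey]; move: ne; rewrite Ey eqn_pmul2r // !leq_pmul2r //; lia.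
Qed.

Definition condb k j q (b : seq nat) :=
  [&& all (fun v => k %| v) b, count (fun v => 0 < v) b == j & sumn b == q * k].

Definition G B L k j q := \sum_(b : L.-tuple 'I_B) condb k j q (map val b).

Lemma G_eq B L k j q : 0 < k -> q * k < B -> G B L k j q = 'C(L, j) * comp q j.
Proof.
move=> k0; elim: L j q => [|L IH] j q qB.
  rewrite /G (big_pred1 [tuple]) /=; last by move=> t; symmetry; apply/eqP; apply: tuple0.
  rewrite /condb /=; case: j => [|j] /=; last by rewrite bin0n.
  by rewrite bin0 mul1n; case: q qB => //= q _; rewrite mulSn; case: k k0.
have B0 : 0 < B by lia.
rewrite /G sum_tuple_cons /=.
rewrite -(big_mkord xpredT (fun x => \sum_(b : L.-tuple 'I_B) condb k j q (x :: map val b))).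
rewrite big_ltn //=.
have -> : \sum_(b : L.-tuple 'I_B) condb k j q (0 :: map val b) = G B L k j q.
  by apply: eq_bigr => b _; rewrite /condb /= dvdn0 add0n.
rewrite IH //.
case: j => [|j].
  rewrite big1_seq; last first.
    move=> x /andP [_]; rewrite mem_index_iota => /andP [x1 _].
    by rewrite big1 // => b _; rewrite /condb /= x1 /= !andbF.
  by rewrite !bin0 addn0.
rewrite (eq_big_nat _ _ (F2 := fun x => if (k %| x) && (x <= q * k) then G B L k j (q - x %/ k) else 0)); last first.
  move=> x /andP [x1 _]; rewrite /G.
  case: (boolP (k %| x)) => /= [/dvdnP [y Ex]|nd]; last first.
    by rewrite big1 // => b _; rewrite /condb /= (negbTE nd).
  have y1 : 0 < y by rewrite lt0n; apply/eqP => y0; move: x1; rewrite Ex y0 mul0n.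
  rewrite Ex mulnK // leq_pmul2r //.
  case: ifP => yq.
    apply: eq_bigr => b _; rewrite /condb /= dvdn_mull // /= muln_gt0 y1 k0 add1n eqSS.
    congr (_ && (_ && _)); apply/eqP/eqP => h; first (rewrite mulnBl; lia).
    by rewrite h mulnBl; move: yq; rewrite -(leq_pmul2r k0) => yq'; lia.
  rewrite big1 // => b _; rewrite /condb /=.
  have : y * k + sumn [seq val i | i <- b] != q * k.
    by apply/eqP; move: yq => /negbT; rewrite -ltnNge -(ltn_pmul2r k0); lia.
  by move/negbTE => ->; rewrite !andbF.
rewrite (sum_mult (fun v => G B L k j (q - v))) //.
rewrite (eq_big_nat _ _ (F2 := fun v => 'C(L, j) * comp (q - v) j)); last first.
  move=> v /andP [_ vq]; rewrite IH //; apply: leq_ltn_trans qB; rewrite leq_pmul2r //; lia.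
by rewrite -big_distrr /= binS mulnDl addnC.
Qed.


Lemma nth0_rot (l : seq nat) i : i < size l -> nth 0 (rot i l) 0 = nth 0 l i.
Proof.
move=> il; rewrite /rot nth_cat size_drop subn_gt0 il nth_drop addn0 //.
Qed.

Lemma count_sum_nth (P : pred nat) (l : seq nat) :
  count P l = \sum_(i < size l) P (nth 0 l i).
Proof. elim: l => [|x l IH]; first by rewrite big_ord0. by rewrite /= big_ord_recl /= IH. Qed.

Lemma count_rot (P : pred nat) r (l : seq nat) : count P (rot r l) = count P l.
Proof. by apply/permP; rewrite perm_rot. Qed.

Lemma all_rot (P : pred nat) r (l : seq nat) : all P (rot r l) = all P l.
Proof. by apply: perm_all; rewrite perm_rot. Qed.

Section DC.
Variables (N k m s : nat).
Local Notation TT := ((N.+1).-tuple 'I_N.+1).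
Definition Kc (c : seq nat) := [&& all (fun v => k %| v) c, count (fun v => 0 < v) c == m & sumn c == N].
Definition gc (c : seq nat) := count (pred1 s) c.

Lemma Kc_rot r c : Kc (rot r c) = Kc c.
Proof. by rewrite /Kc all_rot count_rot sumn_rot. Qed.
Lemma gc_rot r c : gc (rot r c) = gc c.
Proof. by rewrite /gc count_rot. Qed.

Lemma rot_tuple_inj r : injective (@rot_tuple N.+1 r 'I_N.+1).
Proof. by move=> x y /(congr1 val) /rot_inj /val_inj. Qed.

Lemma map_val_rot r (c : TT) : map val (rot_tuple r c) = rot r (map val c).
Proof. by rewrite /= map_rot. Qed.

Lemma rotr_tuple_inj r : injective (@rotr_tuple N.+1 r 'I_N.+1).
Proof. by move=> x y /(congr1 val) /(can_inj (@rotrK r _)) /val_inj. Qed.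

Lemma map_val_rotr r (c : TT) : map val (rotr_tuple r c) = rotr r (map val c).
Proof. by rewrite /= map_rotr. Qed.

Lemma Kc_rotr r c : Kc (rotr r c) = Kc c.
Proof. by rewrite /rotr Kc_rot. Qed.
Lemma gc_rotr r c : gc (rotr r c) = gc c.
Proof. by rewrite /rotr gc_rot. Qed.

Lemma dc1 : \sum_(c : TT | Kc (map val c)) gc (map val c) =
  N.+1 * \sum_(c : TT | validb (map val c) N && Kc (map val c)) gc (map val c).
Proof.
rewrite (eq_bigr (fun c : TT => \sum_(r < N.+1) (validb (rot r (map val c)) N * gc (map val c)))); last first.
  move=> c /and3P [_ _ /eqP sc]; rewrite -big_distrl /= cycle_count ?mul1n //.
  by rewrite size_map size_tuple.
have -> : forall X, N.+1 * X = \sum_(r < N.+1) X by move=> X; rewrite sum_nat_const card_ord.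
rewrite exchange_big /=.
apply: eq_bigr => r _.
rewrite big_mkcond [RHS]big_mkcond /=.
rewrite (reindex_inj (rotr_tuple_inj (r:=r))) /=.
apply: eq_big => [//|c _].
rewrite !map_val_rotr Kc_rotr gc_rotr rotrK.
by case: (Kc _); case: (validb _ _); rewrite ?andbT ?andbF //= ?mul1n.
Qed.

Lemma dc2 : \sum_(c : TT | Kc (map val c)) gc (map val c) =
  N.+1 * \sum_(c : TT | Kc (map val c) && (nth 0 (map val c) 0 == s)) 1.
Proof.
rewrite (eq_bigr (fun c : TT => \sum_(i < N.+1) (nth 0 (map val c) i == s))); last first.
  by move=> c _; rewrite /gc count_sum_nth size_map size_tuple.
rewrite big_mkcond /=.
rewrite (eq_bigr (fun c : TT => \sum_(i < N.+1) (Kc (map val c) && (nth 0 (map val c) i == s)))); last first.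
  by move=> c _; case: (Kc _) => //; rewrite big1.
have -> : forall X, N.+1 * X = \sum_(r < N.+1) X by move=> X; rewrite sum_nat_const card_ord.
rewrite exchange_big /=.
apply: eq_bigr => i _.
rewrite [RHS]big_mkcond /=.
rewrite [RHS](reindex_inj (rot_tuple_inj (r:=i))) /=.
apply: eq_big => [//|c _].
rewrite !map_val_rot Kc_rot nth0_rot ?size_map ?size_tuple //.

Qed.

End DC.


Lemma card_ord_pred N (p : pred nat) : #|[set y : 'I_N | p y]| = \sum_(0 <= y < N) p y.
Proof.
rewrite -sum1_card big_mkcond big_mkord /=; apply: eq_bigr => y _.
by rewrite inE; case: (p y).
Qed.

Lemma cnt_le f N p : cnt f N p <= N.
Proof.
rewrite /cnt; apply: leq_trans (_ : \sum_(0 <= x < N) 1 <= N).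
  by rewrite !big_nat; apply: leq_sum => x _; case: (f x == p).
by rewrite sum_nat_const_nat; lia.
Qed.

Section Dec.
Variables (N k : nat) (a : seq nat).
Hypothesis va : validc a N.
Local Notation g := (fun i : 'I_N => own a i).
Local Notation blk x := [set y in [set: 'I_N] | g x == g y].
Definition decP := preim_partition g [set: 'I_N].

Lemma eq_g : {in [set: 'I_N] & &, equivalence_rel (fun x y : 'I_N => g x == g y)}.
Proof. by move=> x y z _ _ _; split; [rewrite eqxx | move/eqP ->]. Qed.

Lemma decP_mem B : (B \in decP) = [exists x, B == blk x].
Proof.
apply/imsetP/existsP => [[x _ ->]|[x /eqP ->]]; first by exists x.
by exists x; rewrite ?inE.
Qed.

Lemma card_blk (x : 'I_N) : #|blk x| = nth 0 a (own a x).
Proof.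
have [h1 h2 h3] := own_props va (ltn_ord x).
rewrite -(cnt_full va) //; last by have := ltn_ord x; lia.
rewrite /cnt -(card_ord_pred N (fun y => own a y == own a x)); apply: eq_card => y; by rewrite !inE eq_sym.
Qed.

Lemma own_leO (x : 'I_N) : own a x <= x.
Proof. by have [] := own_props va (ltn_ord x). Qed.

Definition rootO (x : 'I_N) : 'I_N := Ordinal (leq_ltn_trans (own_leO x) (ltn_ord x)).

Lemma blk_root x : blk (rootO x) = blk x.
Proof. apply/setP => y; rewrite !inE /=; by have [_ _ ->] := own_props va (ltn_ord x). Qed.

Lemma decP_img : decP = [set blk x | x in [set r : 'I_N | 0 < nth 0 a r]].
Proof.
apply/setP => B; rewrite decP_mem; apply/existsP/imsetP => [[x /eqP ->]|[r _ ->]].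
  exists (rootO x); last by rewrite blk_root.
  by rewrite inE /=; have [_ -> _] := own_props va (ltn_ord x).
by exists r.
Qed.

Lemma blk_inj : {in [set r : 'I_N | 0 < nth 0 a r] &, injective (fun x => blk x)}.
Proof.
move=> r1 r2; rewrite !inE => h1 h2 /= E.
have : r2 \in [set y in [set: 'I_N] | own a r1 == own a y] by rewrite E !inE eqxx.
rewrite !inE /= !own_root // => /eqP E'; exact: val_inj.
Qed.

Lemma count_pos_N (P : pred nat) : ~~ P 0 ->
  count P a = \sum_(0 <= i < N) P (nth 0 a i).
Proof.
move=> P0; case: (va) => sa _ _.
rewrite count_sum_nth sa big_ord_recr /= lastA0 // (negbTE P0) addn0.
by rewrite big_mkord.
Qed.

Lemma card_decP : #|decP| = count (fun v => 0 < v) a.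
Proof.
rewrite decP_img card_in_imset; last exact: blk_inj.
by rewrite count_pos_N // -(card_ord_pred N (fun i => 0 < nth 0 a i)).
Qed.

Lemma card_decP_s s : 0 < s -> #|[set B in decP | #|B| == s]| = count (pred1 s) a.
Proof.
move=> s0.
have -> : [set B in decP | #|B| == s] = [set blk x | x in [set r : 'I_N | nth 0 a r == s]].
  apply/setP => B; rewrite inE decP_img; apply/andP/imsetP.
  - move=> [/imsetP [r]]; rewrite inE => rpos -> /eqP cs; exists r => //.
    by rewrite inE -cs card_blk own_root.
  - move=> [r]; rewrite inE => /eqP rs ->; split; last by rewrite card_blk own_root ?rs.
    by apply/imsetP; exists r => //; rewrite inE rs.
rewrite card_in_imset; last first.
  move=> r1 r2; rewrite !inE => /eqP h1 /eqP h2; apply: blk_inj; rewrite inE ?h1 ?h2 //.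
rewrite count_pos_N /=; last by rewrite eq_sym -lt0n.
by rewrite -(card_ord_pred N (fun i => nth 0 a i == s)).
Qed.

Lemma decP_part : partition decP [set: 'I_N].
Proof. exact: preim_partitionP. Qed.

Lemma decP_nc : noncrossing decP.
Proof.
apply/negP => /existsP [B1] /andP [B1P] /existsP [B2] /andP [B2P].
move=> /existsP [x] /existsP [y] /existsP [c] /existsP [w].
move=> /and5P [ne xy yc cw /and4P [xB1 cB1 yB2 wB2]].
move: B1P B2P; rewrite !decP_mem => /existsP [x1 /eqP E1] /existsP [x2 /eqP E2].
move: xB1 cB1 yB2 wB2; rewrite E1 E2 !inE /= => /eqP h1 /eqP h2 /eqP h3 /eqP h4.
have := own_nc va xy yc cw (ltn_ord w) (etrans (esym h1) h2) (etrans (esym h3) h4).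
move=> E; move: ne; rewrite E1 E2; apply/negP; rewrite negbK; apply/eqP/setP => z.
by rewrite !inE h1 h3 E.
Qed.

Lemma decP_div : all (fun v => k %| v) a -> [forall B in decP, k %| #|B|].
Proof.
move=> /allP H; apply/forall_inP => B; rewrite decP_mem => /existsP [x /eqP ->].
rewrite card_blk; apply: H; apply: mem_nth; case: (va) => -> _ _.
have [h1 _ _] := own_props va (ltn_ord x); have := ltn_ord x; lia.
Qed.

End Dec.

Section Enc.
Variables (N k : nat) (P : {set {set 'I_N}}).
Hypotheses (Pp : partition P [set: 'I_N]) (Pnc : noncrossing P)
  (Pk : [forall B in P, k %| #|B|]).

Lemma inblk (x : 'I_N) : x \in pblock P x.
Proof. by rewrite mem_pblock (cover_partition Pp) inE. Qed.

Definition fO (x : 'I_N) : 'I_N := [arg min_(j < x in pblock P x) val j].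

Lemma fO_spec x : fO x \in pblock P x /\ forall j, j \in pblock P x -> fO x <= j.
Proof. rewrite /fO; case: arg_minnP; first exact: inblk. by move=> i h1 h2; split. Qed.

Lemma trivP : trivIset P.
Proof. by case/and3P: Pp. Qed.

Lemma fO_block x : pblock P (fO x) = pblock P x.
Proof. exact: same_pblock trivP (fO_spec x).1. Qed.

Lemma fO_same x y : (y \in pblock P x) = (fO y == fO x).
Proof.
apply/idP/eqP => [yx|E].
- have Eb : pblock P y = pblock P x := same_pblock trivP yx.
  have [a1 a2] := fO_spec x; have [b1 b2] := fO_spec y.
  apply: val_inj; apply/eqP; rewrite eqn_leq; apply/andP; split.
  + by apply: b2; rewrite Eb.
  + by apply: a2; rewrite -Eb.
- by rewrite -fO_block -E fO_block inblk.
Qed.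

Lemma fO_le x : fO x <= x.
Proof. exact: (fO_spec x).2 (inblk x). Qed.

Lemma fO_idem x : fO (fO x) = fO x.
Proof. apply/eqP; rewrite -fO_same; exact: (fO_spec x).1. Qed.

Definition fn (i : nat) : nat := if insub i is Some x then val (fO x) else i.

Lemma fnE (x : 'I_N) : fn x = fO x.
Proof. rewrite /fn; case: insubP => [y _ /val_inj -> //|]; by rewrite ltn_ord. Qed.

Lemma fnE' x (xN : x < N) : fn x = fO (Ordinal xN).
Proof. exact: (fnE (Ordinal xN)). Qed.

Lemma fn_props : [/\ forall x, x < N -> fn x <= x,
  forall x, x < N -> fn (fn x) = fn x &
  forall x y c w, x < y -> y < c -> c < w -> w < N ->
     fn x = fn c -> fn y = fn w -> fn x = fn y].
Proof.
split.
- move=> x xN; rewrite (fnE' xN); exact: fO_le.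
- move=> x xN; rewrite (fnE' xN) (fnE (fO (Ordinal xN))) fO_idem //.
- move=> x y c w xy yc cw wN.
  have cN : c < N by lia. have yN : y < N by lia. have xN : x < N by lia.
  rewrite (fnE' xN) (fnE' yN) (fnE' cN) (fnE' wN).
  move=> /val_inj E1 /val_inj E2; apply/eqP; rewrite val_eqE; apply/negPn/negP => ne.
  move: Pnc => /negP; apply; apply/existsP; exists (pblock P (Ordinal xN)).
  rewrite pblock_mem ?(cover_partition Pp) ?inE //=; apply/existsP.
  exists (pblock P (Ordinal yN)); rewrite pblock_mem ?(cover_partition Pp) ?inE //=.
  apply/existsP; exists (Ordinal xN); apply/existsP; exists (Ordinal yN).
  apply/existsP; exists (Ordinal cN); apply/existsP; exists (Ordinal wN).
  rewrite /= xy yc cw !inblk !fO_same E1 E2 !eqxx !andbT /=.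
  by apply/eqP => Eb; move: ne; rewrite eq_sym -fO_same Eb inblk.
Qed.

Definition codeP := codeof fn N.

Lemma codeP_valid : validc codeP N.
Proof. have [h1 h2 h3] := fn_props; exact: codeof_valid. Qed.

Lemma codeP_own (x : 'I_N) : own codeP x = fO x.
Proof. have [h1 h2 h3] := fn_props; rewrite codeof_own //; exact: fnE. Qed.

Lemma codeP_dec : decP N codeP = P.
Proof.
rewrite /decP -[RHS](preim_partition_pblock Pp).
rewrite /preim_partition /equivalence_partition; apply: eq_imset => x; apply/setP => y.
rewrite !inE !codeP_own; apply/eqP/eqP => [/val_inj E|E].
- by rewrite -(fO_block x) E fO_block.
- by congr val; apply/eqP; rewrite -fO_same -E inblk.
Qed.

Lemma codeP_div : all (fun v => k %| v) codeP.
Proof.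
apply/allP => v /(nthP 0) [i]; rewrite size_mkseq => iN <-.
rewrite /codeP /codeof nth_mkseq //; case: ifP => [/andP [iN' /eqP ri]|_]; last by rewrite dvdn0.
move: Pk => /forall_inP /(_ (pblock P (Ordinal iN'))).
rewrite pblock_mem ?(cover_partition Pp) ?inE // => /(_ isT).
congr (_ %| _); rewrite /cnt -card_ord_pred; apply: eq_card => y; rewrite !inE.
by rewrite fO_same (fnE y) -{2}ri (fnE' iN').
Qed.

End Enc.


Lemma code_recover a N : validc a N -> a = codeof (own a) N.
Proof.
move=> va; case: (va) => sa _ _.
apply: (@eq_from_nth _ 0); first by rewrite size_mkseq sa.
move=> i; rewrite sa => iN; rewrite /codeof nth_mkseq //.
case: (ltngtP i N) => [iN'|//|->]; last by rewrite lastA0.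
  case: (posnP (nth 0 a i)) => [A0|Apos].
    have [j [ji Ej _ _]] := own_step va iN' A0.
    have [h1 _ _] := own_props va (ltn_trans ji iN').
    by rewrite /= Ej ifF //; apply/negbTE; rewrite neq_ltn; apply/orP; left; lia.
  by rewrite /= own_root // eqxx (cnt_full va).
by move=> h; lia.
Qed.

Lemma codeof_ext f g N : (forall x, x < N -> f x = g x) -> codeof f N = codeof g N.
Proof.
move=> H; apply: eq_mkseq => i; case: (ltnP i N) => iN //=.
rewrite H //; congr (if _ then _ else _); apply: eq_big_nat => x /andP [_ xN]; by rewrite H.
Qed.

Lemma pblock_decP N a (x y : 'I_N) : (y \in pblock (decP N a) x) = (own a x == own a y).
Proof.
rewrite /decP /preim_partition pblock_equivalence_partition ?inE //.
by move=> u v w _ _ _; split; [rewrite eqxx | move/eqP ->].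
Qed.

Lemma decP_inj N a1 a2 : validc a1 N -> validc a2 N -> decP N a1 = decP N a2 -> a1 = a2.
Proof.
move=> v1 v2 E.
have H : forall x y : 'I_N, (own a1 x == own a1 y) = (own a2 x == own a2 y).
  by move=> x y; rewrite -!pblock_decP E.
rewrite (code_recover v1) (code_recover v2); apply: codeof_ext => x xN.
have [h1 _ h3] := own_props v1 xN; have [g1 _ g3] := own_props v2 xN.
pose X := Ordinal xN.
have r1N : own a1 x < N by lia. have r2N : own a2 x < N by lia.
pose R1 := Ordinal r1N; pose R2 := Ordinal r2N.
have e1 := H X R1; have e2 := H X R2.
rewrite /= h3 eqxx in e1; rewrite /= g3 eqxx in e2.
have [k1 _ _] := own_props v2 r1N; have [k2 _ _] := own_props v1 r2N.
move: e1 e2 => /esym/eqP e1 /eqP e2.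
lia.
Qed.


Definition NCset N k := [set P : {set {set 'I_N}} |
  [&& partition P [set: 'I_N], noncrossing P & [forall B in P, k %| #|B|]]].

Definition ctup N (l : seq nat) : (N.+1).-tuple 'I_N.+1 := [tuple inord (nth 0 l i) | i < N.+1].

Lemma ctupK N l : size l = N.+1 -> all (fun v => v <= N) l -> map val (ctup N l) = l.
Proof.
move=> sl /allP al; apply: (@eq_from_nth _ 0); first by rewrite size_map size_tuple sl.
move=> i; rewrite size_map size_tuple => iN.
rewrite (nth_map (ord0 : 'I_N.+1)) ?size_tuple // -(tnth_nth _ _ (Ordinal iN)) tnth_mktuple /=.
by rewrite inordK // ltnS; apply: al; apply: mem_nth; rewrite sl.
Qed.

Section Main.
Variables (N k m s : nat).
Hypothesis s0 : 0 < s.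
Local Notation TT := ((N.+1).-tuple 'I_N.+1).
Definition dec (a : TT) := decP N (map val a).
Definition VK := [set a : TT | validb (map val a) N && all (fun v => k %| v) (map val a)].

Lemma NCset_img : NCset N k = dec @: VK.
Proof.
apply/setP => P; apply/idP/imsetP.
- rewrite inE => /and3P [Pp Pnc Pk].
  have vc := codeP_valid Pp Pnc Pk.
  have szc : size (codeP P) = N.+1 by case: vc.
  have lec : all (fun v => v <= N) (codeP P).
    apply/allP => v /(nthP 0) [i]; rewrite szc => iN <-.
    rewrite /codeP /codeof nth_mkseq //; case: ifP => _ //; exact: cnt_le.
  exists (ctup N (codeP P)).
    by rewrite inE ctupK //; apply/andP; split; [apply/validbP | exact: (codeP_div Pp Pk)].
  by rewrite /dec ctupK // (codeP_dec Pp Pnc Pk).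
- move=> [a]; rewrite inE => /andP [/validbP va ka] ->.
  by rewrite inE decP_part decP_nc // decP_div.
Qed.

Lemma dec_inj : {in VK &, injective dec}.
Proof.
move=> a1 a2; rewrite !inE => /andP [/validbP v1 _] /andP [/validbP v2 _] E.
by apply: val_inj; apply: (inj_map val_inj); apply: decP_inj v1 v2 E.
Qed.

Lemma main_reindex :
  \sum_(P in NCset N k | #|P| == m) #|[set B in P | #|B| == s]| =
  \sum_(a : TT | validb (map val a) N && Kc N k m (map val a)) gc s (map val a).
Proof.
rewrite NCset_img big_imset_cond; last exact: dec_inj.
rewrite [LHS]big_mkcond [RHS]big_mkcond /=; apply: eq_bigr => a _.
rewrite inE; case: (boolP (validb _ _)) => /= [vb|] //.
have va := validbP _ _ vb; case: (va) => _ sm _.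
rewrite /dec card_decP // card_decP_s // /Kc sm eqxx andbT.
by case: (all _ _); case: (count _ _ == m).
Qed.

End Main.


Lemma binz_comp (q j : nat) : binz (q%:Z - 1)%R (j%:Z - 1)%R = comp q j.
Proof.
rewrite /binz; case: j => [|j]; case: q => [|q] //=.
- by rewrite big_geq.
- change (\sum_(1 <= v < q.+2) comp (q.+1 - v) j) with (comp q.+1 j.+1); rewrite comp_bin.
  have -> : (j.+1%:Z - 1 = j%:Z)%R by lia.
  have -> : (q.+1%:Z - 1 = q%:Z)%R by lia.
  case: ifP => h; first by rewrite !subSS !subn0.
  rewrite bin_small //; move: h; lia.
Qed.

Definition W N k m s := \sum_(c : (N.+1).-tuple 'I_N.+1 | Kc N k m (map val c) && (nth 0 (map val c) 0 == s)) 1.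

Lemma W_sum N k m s : W N k m s =
  \sum_(0 <= x < N.+1) (if x == s then \sum_(b : N.-tuple 'I_N.+1) Kc N k m (x :: map val b) else 0).
Proof.
rewrite /W big_mkcond /=.
rewrite (eq_bigr (fun c : (N.+1).-tuple 'I_N.+1 => nat_of_bool (Kc N k m (map val c) && (nth 0 (map val c) 0 == s)))); last by move=> c _; case: (_ && _).
rewrite sum_tuple_cons /= big_mkord; apply: eq_bigr => x _.
case: (val x == s); first by apply: eq_bigr => b _; rewrite andbT.
by rewrite big1 // => b _; rewrite andbF.
Qed.

Lemma W_G N k m' s q : 0 < k -> 0 < s -> k %| s -> N = q * k + s -> W N k m'.+1 s = G N.+1 N k m' q.
Proof.
move=> k0 s0 ks NE; rewrite W_sum (sum_nat_pick (fun x => \sum_(b : N.-tuple 'I_N.+1) Kc N k m'.+1 (x :: map val b))); last by lia.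
apply: eq_bigr => b _; rewrite /Kc /condb /= ks s0 /= add1n eqSS.
congr (_ && (_ && _)); apply/eqP/eqP; lia.
Qed.

Lemma W_big N k m s : N < s -> W N k m s = 0.
Proof.
move=> Ns; rewrite W_sum big1_seq // => x /andP [_]; rewrite mem_index_iota => /andP [_ xN].
by rewrite ifF //; apply/negbTE; rewrite neq_ltn; apply/orP; left; lia.
Qed.


Lemma binz_nat (a b : nat) : binz a%:Z b%:Z = 'C(a, b).
Proof.
rewrite /binz; case: ifP => h; first by [].
by rewrite bin_small //; move: h; lia.
Qed.

Lemma binz_neg (a b : int) : (a <= -2)%R -> (-1 <= b)%R -> binz a b = 0.
Proof.
move=> ha hb; rewrite /binz; case: ifP => h; first by exfalso; move: h; lia.
rewrite ifF //; apply/negbTE; apply/negP => /andP [/eqP h1 _]; lia.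
Qed.

Theorem proposition2p1 (k n m t : nat) :
  (0 < k)%N -> (0 < n)%N -> (0 < m)%N -> (0 < t)%N ->
  (\sum_(P in NCk k n | #|P| == m) #|[set B in P | #|B| == t * k]|)%N
  = (binz (n * k)%:Z (m%:Z - 1)%R * binz (n%:Z - t%:Z - 1)%R (m%:Z - 2)%R)%N.
Proof.
move=> k0 n0 m0 t0.
have s0 : 0 < t * k by rewrite muln_gt0 t0 k0.
change (NCk k n) with (NCset (k * n) k).
rewrite (main_reindex (k * n) k m s0).
set N := k * n.
have VW : \sum_(a : (N.+1).-tuple 'I_N.+1 | validb (map val a) N && Kc N k m (map val a)) gc (t * k) (map val a)
  = W N k m (t * k).
  apply/eqP; rewrite -(eqn_pmul2l (ltn0Sn N)) -dc1 dc2 //.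
rewrite VW.
case: m m0 VW => [//|m'] _ VW.
have -> : (m'.+1%:Z - 1 = m'%:Z)%R by lia.
rewrite binz_nat.
case: (leqP t n) => tn.
- have NE : N = (n - t) * k + t * k by rewrite /N mulnBl; nia.
  have qB : (n - t) * k < N.+1 by rewrite /N; nia.
  rewrite (@W_G N k m' (t * k) (n - t) k0 s0 (dvdn_mull _ (dvdnn k)) NE) G_eq //.
  have -> : (n%:Z - t%:Z - 1 = (n - t)%:Z - 1)%R by lia.
  have -> : (m'.+1%:Z - 2 = m'%:Z - 1)%R by lia.
  by rewrite binz_comp /N (mulnC n k).
- rewrite W_big; last by rewrite /N; nia.
  rewrite binz_neg ?muln0 //; lia.
Qed.
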